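(* Let $\lambda=[4,2,2]$ and $\mu=[5,3]$. Then $\lambda\preccurlyeq_S\mu$, but $\lambda$ does not stably embed into $\mu$, i.e. there is no integral partition $\nu$ with $\lambda\times\nu\hookrightarrow\mu\times\nu$.
   Context: Partitions are finite nonincreasing sequences of positive integers. The product $\lambda\times\nu$ is the partition of all products $\lambda_i\nu_j$, reordered nonincreasingly. $\lambda=[\lambda_1,\ldots,\lambda_m]$ embeds into $\mu=[\mu_1,\ldots,\mu_n]$, written $\lambda\hookrightarrow\mu$, if there is a map $\varphi:\{1,\ldots,m\}\to\{1,\ldots,n\}$ with $\sum_{i\in\varphi^{-1}(j)}\lambda_i\le\mu_j$ for all $j$. $\lambda\preccurlyeq_S\mu$ means: for every $x\in\mathbb N$, $\sum_{\lambda_i\ge x}\lambda_i\le\sum_{\mu_j\ge x}\mu_j$. *)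

(* Defs.v *)
From mathcomp Require Import all_boot.
Set Implicit Arguments. Unset Strict Implicit. Unset Printing Implicit Defensive.

Definition is_partition (s : seq nat) : bool :=
  sorted geq s && all (fun x => 0 < x) s.

Definition pprod (lam nu : seq nat) : seq nat :=
  sort geq [seq x * y | x <- lam, y <- nu].

Definition embeds (lam mu : seq nat) : Prop :=
  exists phi : 'I_(size lam) -> 'I_(size mu),
    forall j : 'I_(size mu),
      \sum_(i < size lam | phi i == j) nth 0 lam i <= nth 0 mu j.

Definition precS (lam mu : seq nat) : Prop :=
  forall x : nat,
    \sum_(a <- lam | x <= a) a <= \sum_(b <- mu | x <= b) b.

(* Main.v *)
Require Import Defs.
From mathcomp Require Import all_boot.
From mathcomp Require Import zify.

Lemma sumn_mapM a t : sumn [seq a * y | y <- t] = a * sumn t.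
Proof. elim: t => [|y t IH] /=; [by rewrite muln0 | by rewrite IH mulnDr]. Qed.

Lemma sumn_allpairs s t : sumn [seq x * y | x <- s, y <- t] = sumn s * sumn t.
Proof.
elim: s => [|a s IH] //=.
by rewrite sumn_cat sumn_mapM IH mulnDl.
Qed.

Lemma sumn_pprod s t : sumn (pprod s t) = sumn s * sumn t.
Proof. by rewrite /pprod (perm_sumn (permEl (perm_sort _ _))) sumn_allpairs. Qed.

Lemma gcd_dvd s x : x \in s -> foldr gcdn 0 s %| x.
Proof.
elim: s => [|a s IH] //=; rewrite in_cons => /orP [/eqP -> | Hx].
  exact: dvdn_gcdl.
exact: dvdn_trans (dvdn_gcdr _ _) (IH Hx).
Qed.

Lemma dvd_gcd s d : (forall x, x \in s -> d %| x) -> d %| foldr gcdn 0 s.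
Proof.
elim: s => [|a s IH] H /=; first exact: dvdn0.
rewrite dvdn_gcd H ?mem_head //=; apply: IH => x Hx; apply: H; by rewrite in_cons Hx orbT.
Qed.

Lemma sum_nth_ord s : \sum_(j < size s) nth 0 s j = sumn s.
Proof.
by rewrite sumnE (big_nth 0) big_mkord.
Qed.

Theorem mainTheorem6 :
  precS [:: 4; 2; 2] [:: 5; 3] /\
  ~ (exists nu : seq nat,
        is_partition nu /\ nu != [::] /\
        embeds (pprod [:: 4; 2; 2] nu) (pprod [:: 5; 3] nu)).
Proof.
split.
  move=> x; rewrite !big_cons !big_nil.
  by case: x => [|[|[|[|[|[|x]]]]]].
case=> nu [/andP [_ Hpos] [Hne [phi Hphi]]].
set L := pprod _ nu in phi Hphi; set M := pprod _ nu in phi Hphi.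
set g := foldr gcdn 0 nu.
have [[y Hy Hndy] | Hall] := altP (@hasP _ (fun y => ~~ (g.*2 %| y)) nu); last first.
  exfalso.
  have H2 : g.*2 %| g.
    apply: dvd_gcd => x Hx; apply/negPn/negP => Hn; apply: (negP Hall); apply/hasP; by exists x.
  have gpos : 0 < g.
    have Ha : head 0 nu \in nu by case: (nu) Hne => // a s _; exact: mem_head.
    have apos : 0 < head 0 nu by move/allP: Hpos => /(_ _ Ha).
    rewrite lt0n; apply/negP => /eqP g0.
    move: (gcd_dvd _ _ Ha); rewrite -/g g0 dvd0n => /eqP a0; by rewrite a0 in apos.
  have := dvdn_leq gpos H2; lia.
have gy : g %| y by exact: gcd_dvd.
have ypos : 0 < y by move/allP: Hpos => /(_ y Hy).
have Htot : sumn L = sumn M by rewrite /L /M !sumn_pprod.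
have Hpart : \sum_(j < size M) \sum_(i < size L | phi i == j) nth 0 L i = sumn L.
  by rewrite -sum_nth_ord (partition_big phi xpredT).
have Heq : forall j, \sum_(i < size L | phi i == j) nth 0 L i = nth 0 M j.
  move=> j; apply/eqP; rewrite eqn_leq Hphi /=.
  move: Hpart; rewrite Htot -sum_nth_ord.
  rewrite (bigD1 j) //= [X in _ = X -> _](bigD1 j) //=.
  have : \sum_(k < size M | k != j) \sum_(i < size L | phi i == k) nth 0 L i
     <= \sum_(k < size M | k != j) nth 0 M k by apply: leq_sum => k _; exact: Hphi.
  move=> Hle Hs; rewrite -(leq_add2r (\sum_(k < size M | k != j) nth 0 M k)) -Hs leq_add2l.
  exact: Hle.
have HyM : 3 * y \in M.
  rewrite /M mem_sort; apply/allpairsP; exists (3, y) => /=; split => //.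
have Hj : index (3 * y) M < size M by rewrite index_mem.
have := Heq (Ordinal Hj); rewrite /= nth_index // => Hb.
have Hd : g.*2 %| 3 * y.
  rewrite -Hb; apply: dvdn_sum => i _.
  have : nth 0 L i \in L by exact: mem_nth.
  rewrite /L mem_sort => /allpairsP [[a z] [/= Ha Hz ->]].
  have gz : g %| z by exact: gcd_dvd.
  have h2 : g.*2 %| 2 * z by rewrite -muln2 mulnC dvdn_mul.
  move: Ha; rewrite !inE => /orP [/eqP -> | /orP [/eqP -> | /eqP ->]] //.
  have -> : 4 * z = 2 * (2 * z) by rewrite mulnA.
  exact: dvdn_mull.
have H2y : g.*2 %| 2 * y by rewrite -muln2 mulnC dvdn_mul.
move: (dvdn_sub Hd H2y); rewrite -mulnBl /= mul1n => Hc.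
by rewrite Hc in Hndy.
Qed.
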